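(* Let $\mathbf{x}=x_1x_2\ldots$ be an infinite word over a finite alphabet. The following statements are equivalent: (i) $\mathbf{x}$ is eventually periodic; (ii) $r(n,\mathbf{x})\le 2n$ for all sufficiently large integers $n$; (iii) there exists $M$ such that $r(n,\mathbf{x})-n\le M$ for all $n\ge 1$.
   Context: For integers $i\le j$, $x_i^j$ denotes the factor $x_ix_{i+1}\cdots x_j$ of $\mathbf{x}$. For $n\ge1$, $r(n,\mathbf{x})=\min\{m\ge1:\ x_i^{i+n-1}=x_{m-n+1}^{m}\text{ for some } i \text{ with } 1\le i\le m-n\}$, i.e. the length of the shortest prefix of $\mathbf{x}$ containing two (possibly overlapping) occurrences of some word of length $n$. *)

(* Defs.v *)
From mathcomp Require Import all_boot.
From Stdlib Require Import ClassicalEpsilon.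
Set Implicit Arguments. Unset Strict Implicit. Unset Printing Implicit Defensive.

(* An infinite word x = x_1 x_2 ... over a finite alphabet A is represented by
   x : nat -> A with the 0-based shift  x_i = x (i - 1)  (i >= 1). *)

(* rep n x m : the prefix x_1 .. x_m contains x_i^{i+n-1} = x_{m-n+1}^m
   for some i with 1 <= i <= m - n. In 0-based indices: x_{i+k} = x (i-1+k),
   x_{m-n+1+k} = x (m-n+k), for k < n. *)
Definition rep (A : finType) (n : nat) (x : nat -> A) (m : nat) : bool :=
  [exists i : 'I_m.+1,
     [&& 1 <= i, i <= m - n &
        [forall k : 'I_n, x (i.-1 + k) == x (m - n + k)]]].

(* r(n, x) = min { m >= 1 : rep n x m }.  (For a finite alphabet such m always
   exists by pigeonhole; the default value 0 is never used then.) *)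
Definition r (A : finType) (n : nat) (x : nat -> A) : nat :=
  match excluded_middle_informative (exists m, rep n x m) with
  | left H => ex_minn H
  | right _ => 0
  end.

Definition eventually_periodic (A : Type) (x : nat -> A) : Prop :=
  exists p N, 0 < p /\ forall i, N <= i -> x (i + p) = x i.

(* Main.v *)
Require Import Defs.
From mathcomp Require Import all_boot zify.
From Stdlib Require Import ClassicalEpsilon Classical.
Set Implicit Arguments. Unset Strict Implicit.

Section FW.
Variable T : Type.
Definition per (y : nat -> T) L p := forall i, i + p < L -> y i = y (i + p).
Definition per2 (y : nat -> T) L g := forall i j u v, i < L -> j < L ->
  i + u * g = j + v * g -> y i = y j.

Lemma per_iter y L g : per y L g -> forall k i, i + k * g < L -> y i = y (i + k * g).
Proof.
move=> H; elim=> [|k IH] i Hi; first by rewrite mul0n addn0.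
rewrite IH; last by rewrite mulSn in Hi; lia.
rewrite H; last by rewrite mulSn in Hi; lia.
by rewrite mulSn; congr y; lia.
Qed.

Lemma per_per2 y L g : per y L g -> per2 y L g.
Proof.
move=> H i j u v Hi Hj E.
have [le|le] := leqP v u.
  have le' : v * g <= u * g by rewrite leq_mul2r le orbT.
  have -> : j = i + (u - v) * g by rewrite mulnBl; lia.
  by rewrite -(per_iter H) // mulnBl; lia.
have le' : u * g <= v * g by rewrite leq_mul2r (ltnW le) orbT.
have -> : i = j + (v - u) * g by rewrite mulnBl; lia.
by rewrite -(per_iter H) //; rewrite mulnBl; lia.
Qed.

Lemma fw k : forall p q L y, p + q <= k -> 0 < p -> 0 < q ->
  p + q <= L + gcdn p q -> per y L p -> per y L q -> per2 y L (gcdn p q).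
Proof.
elim: k => [|k IH] p q L y Hk Hp Hq HL Pp Pq; first lia.
have key : forall p q, q < p -> p + q <= k.+1 -> 0 < q ->
    p + q <= L + gcdn p q -> per y L p -> per y L q -> per2 y L (gcdn p q).
  move=> {Hk Hp Hq HL Pp Pq p q} p q lt Hk Hq HL Pp Pq.
  have Eg : gcdn p q = gcdn (p - q) q.
    by rewrite gcdnC -{1}(subnK (ltnW lt)) gcdnDr gcdnC.
  have gq : gcdn p q <= q by apply: dvdn_leq => //; apply: dvdn_gcdr.
  have gpq : gcdn p q <= p - q.
    by rewrite Eg; apply: dvdn_leq; [lia | apply: dvdn_gcdl].
  have P2 : per2 y (L - q) (gcdn p q).
    rewrite Eg; apply: IH; try lia.
    - move=> i Hi; rewrite Pp; last lia.
      rewrite (Pq (i + (p - q))); last lia.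
      congr y; lia.
    - move=> i Hi; apply: Pq; lia.
  have [v0 Hv0] : exists v0, q = v0 * gcdn p q.
    by exists (q %/ gcdn p q); rewrite divnK // dvdn_gcdr.
  have red : forall i, i < L -> exists i' e, i' < L - q /\
      i = i' + e * (gcdn p q) /\ y i = y i'.
    move=> i0 H0; case: (ltnP i0 (L - q)) => H1.
      by exists i0, 0; rewrite mul0n addn0.
    exists (i0 - q), v0; split; first lia.
    split; first by rewrite -Hv0; lia.
    symmetry; rewrite Pq; [congr y; lia | lia].
  move=> i j u v Hi Hj E.
  have [i' [e1 [Hi' [Ei Yi]]]] := red i Hi.
  have [j' [e2 [Hj' [Ej Yj]]]] := red j Hj.
  rewrite Yi Yj; apply: (P2 _ _ (e1 + u) (e2 + v)) => //.
  rewrite !mulnDl; lia.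
case: (ltngtP p q) => [lt|lt|eq].
- rewrite gcdnC; apply: key => //; try lia; rewrite gcdnC; lia.
- by apply: key => //; lia.
- by subst; rewrite gcdnn; apply: per_per2.
Qed.
End FW.

Section Main.
Variable A : finType.
Variable x : nat -> A.

Lemma repP n m : rep n x m <->
  exists a, a < m - n /\ forall k, k < n -> x (a + k) = x (m - n + k).
Proof.
split.
  move/existsP=> [i /and3P [H1 H2 /forallP H3]].
  exists i.-1; split; first lia.
  by move=> k Hk; apply/eqP; exact: (H3 (Ordinal Hk)).
move=> [a [Ha H]]; apply/existsP.
have Hi : a.+1 < m.+1 by lia.
exists (Ordinal Hi); apply/and3P; split => //=.
by apply/forallP => k; apply/eqP; exact: H.
Qed.

Lemma r_min n m : rep n x m -> r n x <= m.
Proof.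
rewrite /r; case: excluded_middle_informative => [H|H] Hm.
  by case: ex_minnP => m0 _ Hmin; exact: Hmin.
by exfalso; apply: H; exists m.
Qed.

Lemma r_rep n : (exists m, rep n x m) -> rep n x (r n x).
Proof.
move=> E; rewrite /r; case: excluded_middle_informative => [H|H] //.
by case: ex_minnP.
Qed.

Lemma rep_ex n : exists m, rep n x m.
Proof.
pose f := fun i : 'I_(#|A|^n).+1 => ([ffun k : 'I_n => x (i + k)] : {ffun 'I_n -> A}).
have : ~~ injectiveb f.
  apply/negP => /injectiveP inj; have := @leq_card _ _ f inj.
  rewrite card_ffun !card_ord; lia.
move/injectivePn => [i [j ne E]].
have key : forall i j : 'I_(#|A|^n).+1, i < j -> f i = f j -> exists m, rep n x m.
  move=> {i j ne E} i j lt E; exists (j + n); apply/repP; exists i; split; first lia.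
  move=> k Hk; have := congr1 (fun g : {ffun 'I_n -> A} => g (Ordinal Hk)) E.
  by rewrite !ffunE /= addnK.
case: (ltngtP i j) => [lt|lt|eq].
- exact: key E.
- exact: key (esym E).
- by move: ne; rewrite (val_inj eq) eqxx.
Qed.

Lemma step n : 0 < n -> r n x <= 2 * n -> r n.+1 x <= 2 * n.+1 ->
  r n.+1 x <= (r n x).+1.
Proof.
move=> n0.
have [a [Ha Ea]] := (repP n (r n x)).1 (r_rep (rep_ex n)).
have [a' [Ha' Ea']] := (repP n.+1 (r n.+1 x)).1 (r_rep (rep_ex n.+1)).
move: Ha Ea Ha' Ea'.
set m := r n x; set m' := r n.+1 x => Ha Ea Ha' Ea' Hm Hm'.
case: (leqP m' m.+1) => // Hlt.
suff H : rep n.+1 x m.+1 by have := r_min H; rewrite -/m'; lia.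
apply/repP; exists a; split; first lia.
move=> k Hk; case: (ltnP k n) => Hkn.
  by rewrite Ea //; congr x; lia.
have -> : k = n by lia.
set b := m - n. set b' := m' - n.+1.
set p := b - a. set q := b' - a'. set s := maxn a a'.
pose y := fun i => x (s + i).
set L := m - s.
have Pp : per y L p.
  move=> i Hi; rewrite /y.
  have := Ea (s + i - a) ltac:(lia).
  have e1 : a + (s + i - a) = s + i by lia.
  have e2 : m - n + (s + i - a) = s + (i + p) by lia.
  by rewrite e1 e2.
have Pq : per y L q.
  move=> i Hi; rewrite /y.
  have := Ea' (s + i - a') ltac:(lia).
  have e1 : a' + (s + i - a') = s + i by lia.
  have e2 : m' - n.+1 + (s + i - a') = s + (i + q) by lia.
  by rewrite e1 e2.
have g0 : 0 < gcdn p q by rewrite gcdn_gt0; apply/orP; left; lia.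
have P2 := @fw _ (p + q) p q L y (leqnn (p + q)) ltac:(lia) ltac:(lia) ltac:(lia) Pp Pq.
have Eq : x (m - q) = x (m - p).
  have := P2 (m - q - s) (m - p - s) (q %/ gcdn p q) (p %/ gcdn p q)
    ltac:(lia) ltac:(lia).
  rewrite !divnK ?dvdn_gcdl ?dvdn_gcdr //.
  rewrite /y => H; have := H ltac:(lia).
  have e1 : s + (m - q - s) = m - q by lia.
  have e2 : s + (m - p - s) = m - p by lia.
  by rewrite e1 e2.
have Em : x m = x (m - q).
  have := Ea' (m - b') ltac:(lia).
  have e1 : a' + (m - b') = m - q by lia.
  have e2 : m' - n.+1 + (m - b') = m by lia.
  by rewrite e1 e2.
have e1 : a + n = m - p by lia.
have e2 : m.+1 - n.+1 + n = m by lia.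
by rewrite e1 e2 Em Eq.
Qed.

Lemma bound_fin (P : nat -> nat -> Prop) C :
  (forall i, i <= C -> exists k, P i k) ->
  exists K, forall i, i <= C -> exists k, k < K /\ P i k.
Proof.
elim: C => [|C IH] H.
  have [k Hk] := H 0 (leqnn 0).
  exists k.+1 => i Hi; exists k; split => //.
  by have -> : i = 0 by lia.
have [K1 HK1] := IH (fun i Hi => H i (leqW Hi)).
have [k Hk] := H C.+1 (leqnn _).
exists (maxn K1 k.+1) => i Hi.
case: (ltnP C i) => Hc.
  have -> : i = C.+1 by lia.
  by exists k; split => //; lia.
have [k' [Hk' Pk']] := HK1 i Hc.
by exists k'; split => //; lia.
Qed.

Lemma i_to_iii : eventually_periodic x ->
  exists M, forall n, 1 <= n -> r n x <= n + M.
Proof.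
move=> [p [N [p0 H]]]; exists (N + p) => n _.
have R : rep n x (N + p + n).
  apply/repP; exists N; split; first lia.
  move=> k Hk.
  have -> : N + p + n - n + k = (N + k) + p by lia.
  by rewrite H //; lia.
have := r_min R; lia.
Qed.

Lemma iii_to_ii : (exists M, forall n, 1 <= n -> r n x <= n + M) ->
  exists N, forall n, N <= n -> r n x <= 2 * n.
Proof.
move=> [M H]; exists M.+1 => n Hn; have := H n ltac:(lia); lia.
Qed.

Lemma ii_to_i : (exists N, forall n, N <= n -> r n x <= 2 * n) ->
  eventually_periodic x.
Proof.
move=> [N HN].
set N0 := maxn N 1.
have st : forall n, N0 <= n -> r n.+1 x <= (r n x).+1.
  move=> n Hn; apply: step; try lia; apply: HN; lia.
have bnd : forall d, r (N0 + d) x <= r N0 x + d.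
  elim=> [|d IH]; first by rewrite !addn0.
  have := st (N0 + d) (leq_addr _ _); rewrite addnS; lia.
set C := r N0 x - N0.
have bC : forall n, N0 <= n -> exists a, a < r n x - n /\ r n x - n <= C /\
    forall k, k < n -> x (a + k) = x (r n x - n + k).
  move=> n Hn.
  have [a [Ha Ea]] := (repP n (r n x)).1 (r_rep (rep_ex n)).
  exists a; split => //; split => //.
  have := bnd (n - N0); rewrite subnKC //; lia.
case: (classic (exists a b, a < b /\ b <= C /\ forall k, x (a + k) = x (b + k))).
  move=> [a [b [ab [_ H]]]]; exists (b - a), a; split; first lia.
  move=> i Hi; have := H (i - a).
  have -> : a + (i - a) = i by lia.
  by have -> : b + (i - a) = i + (b - a) by lia.
move=> nE.
have inner : forall b, b <= C -> exists K, forall a, a <= C -> exists k,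
    k < K /\ (a < b -> x (a + k) <> x (b + k)).
  move=> b Hb; apply: bound_fin => a Ha.
  case: (ltnP a b) => ab.
    case: (classic (exists k, x (a + k) <> x (b + k))) => [[k Hk]|nk].
      by exists k.
    exfalso; apply: nE; exists a, b; split => //; split => //.
    move=> k; case: (classic (x (a + k) = x (b + k))) => // ne.
    by exfalso; apply: nk; exists k.
  by exists 0 => ab'; lia.
have [K HK] := bound_fin inner.
have [a [Ha [HC Ea]]] := bC (maxn N0 K) (leq_maxl _ _).
have [Kb [HKb Pb]] := HK _ HC.
have [k [Hk Pk]] := Pb a ltac:(lia).
by exfalso; apply: (Pk Ha (Ea k ltac:(lia))).
Qed.

End Main.

Theorem theorem2p3 (A : finType) (x : nat -> A) :
  (eventually_periodic x <-> exists N, forall n, N <= n -> r n x <= 2 * n) /\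
  ((exists N, forall n, N <= n -> r n x <= 2 * n) <->
   exists M, forall n, 1 <= n -> r n x <= n + M).
Proof.
split; split.
- by move/i_to_iii/iii_to_ii.
- exact: ii_to_i.
- by move/ii_to_i/i_to_iii.
- exact: iii_to_ii.
Qed.
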